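(* Let $\mathbf p=(p_i)_{i\in\mathbb N}$ and $\mathbf q=(q_i)_{i\in\mathbb N}$ be sequences with $p_i,q_i\ge 0$ for all $i$ and $\sum_i p_i=\sum_i q_i=1$. Let $H(\mathbf p)=-\sum_{i\in\mathbb N}p_i\ln p_i$ (with the convention $0\ln 0=0$), and define $H(\mathbf q)$ similarly. Assume that for some $c\in(0,1/3)$, $$|p_i-q_i|\le c\,q_i\quad\text{for all } i=1,2,\dots.$$ Then $$H(\mathbf p)\le (1+c)H(\mathbf q)+c\ln 3.$$ *)

(* Defs.v *)
From HB Require Import structures.
From mathcomp Require Import all_boot all_order all_algebra.
From mathcomp Require Import all_classical all_reals all_analysis.
Set Implicit Arguments. Unset Strict Implicit. Unset Printing Implicit Defensive.
Import Order.TTheory GRing.Theory Num.Theory.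
Local Open Scope ring_scope.
Local Open Scope ereal_scope.

Definition prob_seq (R : realType) (p : nat -> R) : Prop :=
  (forall i, (0 <= p i)%R) /\ \sum_(0 <= i <oo) (p i)%:E = 1%E.

(* Shannon entropy H(p) = - sum_i p_i ln p_i, as an extended real
   (possibly +oo).  The term for p_i = 0 is 0 since 0 * ln 0 = 0. *)
Definition entropy (R : realType) (p : nat -> R) : \bar R :=
  \sum_(0 <= i <oo) (- (p i * ln (p i)))%:E.

(* Main.v *)
Require Import Defs.
From HB Require Import structures.
From mathcomp Require Import all_boot all_order all_algebra.
From mathcomp Require Import all_classical all_reals all_analysis.
From mathcomp Require Import lra.
Import Order.TTheory GRing.Theory Num.Theory.
Local Open Scope ring_scope.

Lemma prob_le1 (R : realType) (p : nat -> R) i : prob_seq p -> p i <= 1.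
Proof.
move=> [p0 s1].
have := @nneseries_lim_ge R (fun j => (p j)%:E) xpredT 0%N i.+1 (fun n _ _ => p0 n).
rewrite s1 big_nat_recr//= => H.
rewrite -lee_fin; apply: le_trans H.
rewrite leeDr// sume_ge0// => j _; exact: p0.
Qed.

Lemma point (R : realType) (p q c : R) : 0 <= p -> p <= 1 -> 0 <= q -> q <= 1 ->
  0 < c -> `|p - q| <= c * q ->
  - (p * ln p) + p <= (1 + c) * (- (q * ln q)) + q.
Proof.
move=> p0 p1 q0 q1 c0 h.
have [hp hp'] : (1 - c) * q <= p /\ p <= (1 + c) * q.
  move: h; rewrite ler_norml; move=> /andP[a b]; split; lra.
have lq : ln q <= 0 by apply: ln_le0.
have [->|pp] := eqVneq p 0.
  rewrite mul0r oppr0 add0r.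
  have : 0 <= (1 + c) * - (q * ln q).
    by apply: mulr_ge0; [lra| rewrite oppr_ge0 mulr_ge0_le0].
  lra.
have pg : 0 < p by rewrite lt0r pp.
have qg : 0 < q.
  rewrite lt0r q0 andbT; apply/eqP => q00; move: hp'; rewrite q00 mulr0; lra.
have k : ln q - ln p <= q / p - 1.
  rewrite -ln_div ?posrE//.
  have := @le_ln1Dx R (q / p - 1).
  rewrite addrCA subrr addr0; apply.
  have : 0 < q / p by apply: divr_gt0.
  lra.
have k2 : p * (ln q - ln p) <= q - p.
  have := ler_wpM2l (ltW pg) k.
  by rewrite !mulrBr mulrCA divff ?mulr1 // (gt_eqF pg).
have k3 : - (p * ln q) <= (1 + c) * (- (q * ln q)).
  have nl : 0 <= - ln q by rewrite oppr_ge0.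
  have := ler_wpM2r nl hp'.
  by rewrite !mulrN -mulrA.
have : - (p * ln p) = - (p * ln q) + p * (ln q - ln p).
  by rewrite mulrBr; lra.
lra.
Qed.

Lemma negxlnx_ge0 (R : realType) (x : R) : 0 <= x -> x <= 1 -> 0 <= - (x * ln x).
Proof. by move=> x0 x1; rewrite oppr_ge0 mulr_ge0_le0 // ln_le0. Qed.

Theorem lemma1 (R : realType) (p q : nat -> R) (c : R) :
  prob_seq p -> prob_seq q ->
  0 < c -> c < 1 / 3 ->
  (forall i, `|p i - q i| <= c * q i) ->
  (entropy p <= (1 + c)%:E * entropy q + (c * ln 3)%:E)%E.
Proof.
move=> hp hq c0 c3 h.
have p1 := fun i => @prob_le1 R p i hp.
have q1 := fun i => @prob_le1 R q i hq.
have [p0 sp] := hp; have [q0 sq] := hq.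
have E1 : (entropy p + 1 = \sum_(0 <= i <oo) ((- (p i * ln (p i)))%:E + (p i)%:E))%E.
  by rewrite nneseriesD ?sp //; move=> i _ _; rewrite lee_fin ?negxlnx_ge0.
have E2 : ((1 + c)%:E * entropy q + 1 =
    \sum_(0 <= i <oo) (((1 + c) * - (q i * ln (q i)))%:E + (q i)%:E))%E.
  rewrite nneseriesD; last 2 first.
  - by move=> i _ _; rewrite lee_fin mulr_ge0 ?negxlnx_ge0 //; lra.
  - by move=> i _ _; rewrite lee_fin.
  rewrite sq; congr (_ + _)%E.
  rewrite /entropy -nneseriesZl; last by move=> i _; rewrite lee_fin negxlnx_ge0.
  by apply: eq_eseriesr => i _; rewrite EFinM.
have L : (entropy p + 1 <= (1 + c)%:E * entropy q + 1)%E.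
  rewrite E1 E2; apply: lee_nneseries.
    by move=> i _ _; rewrite -EFinD lee_fin addr_ge0 // negxlnx_ge0.
  by move=> i _; rewrite -!EFinD lee_fin point.
rewrite leeD2rE // in L.
apply: (le_trans L); rewrite leeDl // lee_fin mulr_ge0 ?ln_ge0 //; [lra|].
by rewrite ler1n.
Qed.
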